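(* Let $t$ be a well-formed tree over $\tilde A_{i,k}$, $\Sigma$ a winning strategy of $P$ in $\mathcal G(t)$, $u\in\Sigma$, and $j$ a $P$-losing number. Suppose that for every strict prefix $w\prec u$ the label $t(w)$ is neither $\sim$ nor $p_{j'}$ with $j'<j$. Then $s(\varepsilon,\Sigma{\upharpoonright}u){\upharpoonright}j=s(u,\Sigma){\upharpoonright}j$.
   Context: Fix natural numbers $i<k$. Trees over a ranked alphabet are partial maps $t:\omega^*\to A$ with non-empty prefix-closed domain where a node with an $m$-ary label has exactly the children $u0,\ldots,u(m-1)$; $t{\upharpoonright}u$ is the subtree at $u$, $\preceq$ the prefix order. The alphabet $\tilde A_{i,k}$ has unary letters $p_i,\ldots,p_k$, a unary letter $\sim$, and binary letters $c_1,c_2$. Players $1,2$; $\bar P$ the opponent. Well-formed: no branch has infinitely many $\sim$. A node $u$ is switched if an odd number of strict prefixes $w\prec u$ have $t(w)=\sim$, kept otherwise. The game $\mathcal G(t)$: positions are nodes, moves to children, start at the root; $u$ is controlled by $P$ iff ($u$ kept and $t(u)=c_P$) or ($u$ switched and $t(u)=c_{\bar P}$). An infinite play is won by player 1 iff it is (eventually) kept and the least $j$ with infinitely many nodes labelled $p_j$ is even, or (eventually) switched and this $j$ is odd (take $j=k$ if none occurs infinitely often). A strategy of $P$ is a set $\Sigma\subseteq\mathrm{dom}(t)$ containing the root, prefix-closed, where each $u\in\Sigma$ controlled by $P$ has exactly one child in $\Sigma$ and every other $u\in\Sigma$ has all children in $\Sigma$; winning if every branch all of whose prefixes lie in $\Sigma$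 is won by $P$. For $u\in\Sigma$, $\Sigma{\upharpoonright}u=\{w:uw\in\Sigma\}$; when no strict prefix of $u$ is labelled $\sim$ it is a winning strategy of $P$ in $\mathcal G(t{\upharpoonright}u)$, and $s(\cdot,\Sigma{\upharpoonright}u)$ is computed with respect to $t{\upharpoonright}u$. $P$-losing numbers: $j\in\{i,\ldots,k\}$ odd for $P=1$, even for $P=2$; $i',k'$ least/largest. Tuples $(\theta_{i'},\theta_{i'+2},\ldots,\theta_{k'})$ of countable ordinals are ordered lexicographically (smaller index more significant), suprema in this order; $(\theta_{i'},\ldots,\theta_{k'}){\upharpoonright}j=(\theta_{i'},\ldots,\theta_j)$ for $P$-losing $j$. A node $u\in\Sigma$ is active if $t(u)=p_j$ for a $P$-losing $j$ and no strict prefix $w\prec u$ has $t(w)=\sim$ or $t(w)=p_{j'}$ with $j'<j$; $\mathrm{act}(\Sigma)$ is the set of active nodes. $u\gg w$ iff $u,w\in\Sigma$, $u\prec w$ and some $w'\in\mathrm{act}(\Sigma)$ has $u\preceq w'\preceq w$ (well-founded for winning $\Sigma$). $\mathrm{succ}_u(\Sigma)$ is the set of $\preceq$-minimal elements of $\{w\in\mathrm{act}(\Sigma):u\preceq w\}$. The map $s(\cdot,\Sigma)$ is defined by well-founded recursion along $\gg$: (a) if $u\in\mathrm{act}(\Sigma)$, $t(u)=p_j$ and $s(u0,\Sigma)=(\theta_{i'},\ldots,\theta_{k'})$, then $s(u,\Sigma)=(\theta_{i'},\ldots,\theta_{j-2},\theta_j+1,0,\ldots,0)$; (b) if $u\notin\mathrm{act}(\Sigma)$,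 then $s(u,\Sigma)=\sup_{w\in\mathrm{succ}_u(\Sigma)}s(w,\Sigma)$ (empty supremum $=(0,\ldots,0)$). *)

(* Defs.v *)
From mathcomp Require Import all_boot.
Set Implicit Arguments. Unset Strict Implicit. Unset Printing Implicit Defensive.

(* |OZ| = 0, |OS a| = |a|+1, |OL f| = sup_n |f n|.  Every countable ordinal
   is represented; ordinals are compared up to [ord_eq]. *)
Inductive Ord : Type := OZ | OS of Ord | OL of (nat -> Ord).

Fixpoint ord_le (a b : Ord) {struct a} : Prop :=
  match a with
  | OZ => True
  | OS a' =>
      (* |a'| < |b| *)
      (fix lt (b : Ord) : Prop :=
         match b with
         | OZ => False
         | OS b' => ord_le a' b'
         | OL g => exists n, lt (g n)
         end) b
  | OL f => forall n, ord_le (f n) b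
  end.

Definition ord_lt (a b : Ord) : Prop := ord_le (OS a) b.
Definition ord_eq (a b : Ord) : Prop := ord_le a b /\ ord_le b a.

Inductive player := P1 | P2.
Definition opp (P : player) := match P with P1 => P2 | P2 => P1 end.

Inductive label := Lp of nat | Lsim | Lc of player.

Definition arity (a : label) : nat :=
  match a with Lp _ => 1 | Lsim => 1 | Lc _ => 2 end.

Definition node := seq nat.
Definition tree := node -> option label.

Definition in_dom (t : tree) (u : node) : Prop := t u <> None.

Definition is_tree (i k : nat) (t : tree) : Prop :=
  [/\ in_dom t [::],
      (forall u v, prefix u v -> in_dom t v -> in_dom t u),
      (forall u a, t u = Some a -> forall n, in_dom t (rcons u n) <-> n < arity a)
    & (forall u j, t u = Some (Lp j) -> i <= j <= k)].

Definition is_sim (o : option label) : bool :=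
  if o is Some Lsim then true else false.
Definition is_c (P : player) (o : option label) : bool :=
  match o, P with Some (Lc P1), P1 => true | Some (Lc P2), P2 => true | _, _ => false end.

Definition pref (b : nat -> nat) (n : nat) : node := mkseq b n.

Definition is_branch (t : tree) (b : nat -> nat) : Prop :=
  forall n, in_dom t (pref b n).

Definition well_formed (t : tree) : Prop :=
  forall b, is_branch t b ->
    exists N, forall n, N <= n -> t (pref b n) <> Some Lsim.

Definition switched (t : tree) (u : node) : bool :=
  odd (count (fun m => is_sim (t (take m u))) (iota 0 (size u))).

Definition controlled (t : tree) (P : player) (u : node) : bool :=
  (~~ switched t u && is_c P (t u)) || (switched t u && is_c (opp P) (t u)).

Definition inf_p (t : tree) (b : nat -> nat) (j : nat) : Prop :=
  forall N, exists n, N <= n /\ t (pref b n) = Some (Lp j).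

(* m is the least j with infinitely many p_j on b (m = k if there is none) *)
Definition least_inf (k : nat) (t : tree) (b : nat -> nat) (m : nat) : Prop :=
  (inf_p t b m /\ forall j, j < m -> ~ inf_p t b j) \/
  (m = k /\ forall j, ~ inf_p t b j).

Definition won_by_1 (k : nat) (t : tree) (b : nat -> nat) : Prop :=
  ((exists N, forall n, N <= n -> ~~ switched t (pref b n)) /\
     exists m, least_inf k t b m /\ ~~ odd m) \/
  ((exists N, forall n, N <= n -> switched t (pref b n)) /\
     exists m, least_inf k t b m /\ odd m).

Definition won_by (k : nat) (t : tree) (P : player) (b : nat -> nat) : Prop :=
  match P with P1 => won_by_1 k t b | P2 => ~ won_by_1 k t b end.

Definition strat := node -> Prop.

Definition is_strategy (t : tree) (P : player) (S : strat) : Prop :=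
  [/\ (forall u, S u -> in_dom t u),
      S [::],
      (forall u v, prefix u v -> S v -> S u),
      (forall u, S u -> controlled t P u ->
         exists n, S (rcons u n) /\ forall m, S (rcons u m) -> m = n)
    & (forall u, S u -> ~~ controlled t P u ->
         forall n, in_dom t (rcons u n) -> S (rcons u n))].

Definition is_winning_strategy (k : nat) (t : tree) (P : player) (S : strat) : Prop :=
  is_strategy t P S /\
  forall b, (forall n, S (pref b n)) -> won_by k t P b.

Definition subtree (t : tree) (u : node) : tree := fun w => t (u ++ w).
Definition restr (S : strat) (u : node) : strat := fun w => S (u ++ w).

Definition losing (i k : nat) (P : player) (j : nat) : bool :=
  (i <= j <= k) && (if P is P1 then odd j else ~~ odd j).

Definition clean_above (t : tree) (u : node) (j : nat) : Prop :=
  forall m, m < size u ->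
    t (take m u) <> Some Lsim /\ forall j', j' < j -> t (take m u) <> Some (Lp j').

Definition active (i k : nat) (t : tree) (P : player) (S : strat) (u : node) : Prop :=
  S u /\ exists j, t u = Some (Lp j) /\ losing i k P j /\ clean_above t u j.

Definition succ_nodes (i k : nat) (t : tree) (P : player) (S : strat) (u w : node) : Prop :=
  [/\ active i k t P S w, prefix u w &
      forall w', active i k t P S w' -> prefix u w' -> prefix w' w -> w' = w].

(* tuples (theta_{i'}, theta_{i'+2}, ..., theta_{k'}) : only the values at
   P-losing indices matter *)
Definition tup := nat -> Ord.

Definition teq (i k : nat) (P : player) (x y : tup) : Prop :=
  forall j, losing i k P j -> ord_eq (x j) (y j).

Definition teq_upto (i k : nat) (P : player) (j : nat) (x y : tup) : Prop :=
  forall j', losing i k P j' -> j' <= j -> ord_eq (x j') (y j').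

Definition lex_lt (i k : nat) (P : player) (x y : tup) : Prop :=
  exists j, [/\ losing i k P j,
               (forall j', losing i k P j' -> j' < j -> ord_eq (x j') (y j'))
             & ord_lt (x j) (y j)].

Definition lex_le (i k : nat) (P : player) (x y : tup) : Prop :=
  lex_lt i k P x y \/ teq i k P x y.

Definition is_lub (i k : nat) (P : player) (A : tup -> Prop) (x : tup) : Prop :=
  (forall y, A y -> lex_le i k P y x) /\
  (forall z, (forall y, A y -> lex_le i k P y z) -> lex_le i k P x z).

Definition bump (j : nat) (th : tup) : tup :=
  fun j' => if j' < j then th j' else if j' == j then OS (th j) else OZ.

Definition is_rank (i k : nat) (t : tree) (P : player) (S : strat)
    (s : node -> tup) : Prop :=
  forall u, S u ->
    (forall j, active i k t P S u -> t u = Some (Lp j) ->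
        teq i k P (s u) (bump j (s (rcons u 0)))) /\
    (~ active i k t P S u ->
        is_lub i k P (fun x => exists w, succ_nodes i k t P S u w /\ x = s w) (s u)).

(* Main.v *)
Require Import Defs.
From mathcomp Require Import all_boot.
From Stdlib Require Import Classical ClassicalEpsilon.
Set Implicit Arguments. Unset Strict Implicit. Unset Printing Implicit Defensive.


Lemma le_OL x g n : ord_le x (g n) -> ord_le x (OL g).
Proof.
elim: x => [//|x IH|f IH] /=.
- by move=> H; exists n.
- move=> H m; exact: IH.
Qed.

Lemma le_S_lt x : forall y, (ord_le x y -> ord_le x (OS y)) /\ (ord_lt x y -> ord_le x y).
Proof.
elim: x => [|x IH|f IH] y.
- by split.
- split.
  + move=> H; exact: (proj2 (IH y)).
  + rewrite /ord_lt. elim: y => [//|y _|g IHg] /=.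
    * exact: (proj2 (IH y)).
    * case=> n H; exists n; exact: IHg.
- split.
  + move=> H n; exact: (proj1 (IH n y)).
  + rewrite /ord_lt. elim: y => [//|y _|g IHg] /=.
    * move=> H n; exact: (proj1 (IH n y)).
    * case=> m H n. apply: (le_OL (n:=m)). exact: IHg.
Qed.

Lemma le_S x y : ord_le x y -> ord_le x (OS y).
Proof. exact: (proj1 (le_S_lt x y)). Qed.
Lemma lt_le x y : ord_lt x y -> ord_le x y.
Proof. exact: (proj2 (le_S_lt x y)). Qed.

Lemma le_refl x : ord_le x x.
Proof.
elim: x => [//|x IH|f IH] /=; first exact: IH.
move=> n; apply: (le_OL (n:=n)); exact: IH.
Qed.

Lemma le_trans a : forall b c, ord_le a b -> ord_le b c -> ord_le a c.
Proof.
elim: a => [//|a IH|f IH] b c.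
- change (ord_lt a b -> ord_le b c -> ord_lt a c).
  rewrite /ord_lt.
  elim: b c => [//|b _|g IHg] c /=.
  + move=> Hab. elim: c => [//|c _|h IHh] /=.
    * exact: IH.
    * case=> n H; exists n; exact: IHh.
  + case=> n H Hc. apply: (IHg n); [exact: H| exact: (Hc n)].
- move=> H Hc n; exact: IH (H n) Hc.
Qed.

Lemma lt_le_trans a b c : ord_lt a b -> ord_le b c -> ord_lt a c.
Proof. exact: le_trans. Qed.
Lemma le_lt_trans a b c : ord_le a b -> ord_lt b c -> ord_lt a c.
Proof. move=> H; apply: le_trans; exact: H. Qed.

Lemma lt_irr a : ~ ord_lt a a.
Proof.
elim: a => [//|a IH|f IH].
- rewrite /ord_lt /=. exact: IH.
- rewrite /ord_lt => H. case: H => n H.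
  apply: (IH n). rewrite /ord_lt.
  apply: (@le_trans _ (OS (OL f))); last exact: H.
  exact: (le_OL (n:=n) (le_refl _)).
Qed.

Lemma lt_le_F a b : ord_lt a b -> ord_le b a -> False.
Proof. move=> H1 H2; apply: (lt_irr (lt_le_trans H1 H2)). Qed.

Lemma le_total a : forall b, ord_le a b \/ ord_lt b a.
Proof.
elim: a => [|a IH|f IH] b.
- by left.
- elim: b => [|b _|g IHg].
  + by right.
  + case: (IH b) => H; [left|right]; exact: H.
  + case: (classic (exists n, ord_lt (OS a) (g n) \/ ord_le (OS a) (g n))).
    * case=> n [H|H]; left; apply: (le_OL (n:=n)); [exact: lt_le H| exact: H].
    * move=> H; right => /= n. case: (IHg n) => H'.
      -- exfalso; apply: H; exists n; by right.
      -- exact: H'.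
- case: (classic (exists n, ord_lt b (f n))).
  + case=> n H; right; by exists n.
  + move=> H; left => n. case: (IH n b) => // H'. exfalso; apply: H; by exists n.
Qed.

Lemma oeq_refl a : ord_eq a a. Proof. split; exact: le_refl. Qed.
Lemma oeq_sym a b : ord_eq a b -> ord_eq b a. Proof. by case. Qed.
Lemma oeq_trans a b c : ord_eq a b -> ord_eq b c -> ord_eq a c.
Proof. case=> ? ? [? ?]; split; apply: le_trans; eauto. Qed.

Definition agr i k P n (x y : tup) :=
  forall j', losing i k P j' -> j' < n -> ord_eq (x j') (y j').
Definition ltj i k P j (x y : tup) :=
  exists j0, [/\ j0 <= j, losing i k P j0, agr i k P j0 x y & ord_lt (x j0) (y j0)].
Definition lej i k P j x y := ltj i k P j x y \/ teq_upto i k P j x y.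

Lemma teqU_refl i k P j x : teq_upto i k P j x x.
Proof. move=> *; exact: oeq_refl. Qed.
Lemma teqU_sym i k P j x y : teq_upto i k P j x y -> teq_upto i k P j y x.
Proof. move=> H j' h1 h2; apply: oeq_sym; exact: H. Qed.
Lemma teqU_trans i k P j x y z :
  teq_upto i k P j x y -> teq_upto i k P j y z -> teq_upto i k P j x z.
Proof. move=> H1 H2 j' h1 h2; apply: oeq_trans (H1 _ h1 h2) (H2 _ h1 h2). Qed.
Lemma teq_teqU i k P j x y : teq i k P x y -> teq_upto i k P j x y.
Proof. move=> H j' h1 _; exact: H. Qed.

Lemma lexle_lej i k P j x y : lex_le i k P x y -> lej i k P j x y.
Proof.
case=> [[a [ha hagr hlt]]|H]; last by right; exact: teq_teqU.
case: (leqP a j) => haj.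
- left; exists a; split=> //.
- right=> j' h1 h2; apply: hagr => //; exact: leq_ltn_trans h2 haj.
Qed.

Lemma teqU_lej i k P j x y : teq_upto i k P j x y -> lej i k P j x y.
Proof. by right. Qed.

Lemma lej_trans i k P j x y z :
  lej i k P j x y -> lej i k P j y z -> lej i k P j x z.
Proof.
case=> [[a [ha hla hag hlt]]|Hxy]; case=> [[b [hb hlb hbg hlt']]|Hyz].
- left. case: (ltngtP a b) => hab.
  + exists a; split=> //.
    * move=> j' h1 h2; apply: oeq_trans (hag _ h1 h2) (hbg _ h1 (ltn_trans h2 hab)).
    * apply: lt_le_trans hlt (proj1 (hbg _ hla hab)).
  + exists b; split=> //.
    * move=> j' h1 h2; apply: oeq_trans (hag _ h1 (ltn_trans h2 hab)) (hbg _ h1 h2).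
    * apply: le_lt_trans (proj1 (hag _ hlb hab)) hlt'.
  + subst b; exists a; split=> //.
    * move=> j' h1 h2; apply: oeq_trans (hag _ h1 h2) (hbg _ h1 h2).
    * apply: lt_le_trans hlt (lt_le hlt').
- left; exists a; split=> //.
  + move=> j' h1 h2; apply: oeq_trans (hag _ h1 h2) (Hyz _ h1 _).
    exact: leq_trans (ltnW h2) ha.
  + apply: lt_le_trans hlt (proj1 (Hyz _ hla ha)).
- left; exists b; split=> //.
  + move=> j' h1 h2; apply: oeq_trans (Hxy _ h1 _) (hbg _ h1 h2).
    exact: leq_trans (ltnW h2) hb.
  + apply: le_lt_trans (proj1 (Hxy _ hlb hb)) hlt'.
- right; exact: teqU_trans Hxy Hyz.
Qed.

Lemma lej_antisym i k P j x y :
  lej i k P j x y -> lej i k P j y x -> teq_upto i k P j x y.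
Proof.
case=> [[a [ha hla hag hlt]]|//]; case=> [[b [hb hlb hbg hlt']]|Hyx].
- exfalso. case: (ltngtP a b) => hab.
  + exact: lt_le_F hlt (proj1 (hbg _ hla hab)).
  + exact: lt_le_F hlt' (proj1 (hag _ hlb hab)).
  + subst b; exact: lt_le_F hlt (lt_le hlt').
- exfalso; exact: lt_le_F hlt (proj1 (Hyx _ hla ha)).
Qed.

Lemma agr_or i k P x y n :
  agr i k P n x y \/ exists j0, [/\ j0 < n, losing i k P j0, agr i k P j0 x y &
                                 ~ ord_eq (x j0) (y j0)].
Proof.
elim: n => [|n [IH|IH]].
- by left.
- case hn: (losing i k P n).
  + case: (classic (ord_eq (x n) (y n))) => He.
    * left=> j' h1; rewrite ltnS leq_eqVlt => /orP [/eqP ->//|h2]; exact: IH.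
    * right; exists n; split=> //.
  + left=> j' h1; rewrite ltnS leq_eqVlt => /orP [/eqP E|h2]; last exact: IH.
    by rewrite E hn in h1.
- right; case: IH => j0 [h1 h2 h3 h4]; exists j0; split=> //; exact: ltnW.
Qed.

Lemma lej_total i k P j x y : lej i k P j x y \/ ltj i k P j y x.
Proof.
case: (agr_or i k P x y j.+1) => [H|[j0 [h1 h2 h3 h4]]].
- by left; right=> j' h h'; apply: H.
- case: (le_total (x j0) (y j0)) => Hle.
  + case: (le_total (y j0) (x j0)) => Hle'.
    * by exfalso; apply: h4.
    * left; left; exists j0; split=> //.
  + right; exists j0; split=> //. move=> j' a b; apply: oeq_sym; exact: h3.
Qed.

Lemma lexlt_le_F i k P x y : lex_lt i k P x y -> lex_le i k P y x -> False.
Proof.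
move=> [a [ha hag hlt]] H.
have H1 : lej i k P a x y by left; exists a; split.
have H2 := lexle_lej a H.
have [_ H3] := lej_antisym H1 H2 ha (leqnn a).
exact: lt_le_F hlt H3.
Qed.

Definition Usup (g : node -> tup) (j' : nat) : Ord :=
  OL (fun n => if unpickle n is Some y then g y j' else OZ).

Lemma Usup_ge g y j' : ord_le (g y j') (Usup g j').
Proof. apply: (le_OL (n := pickle y)); rewrite pickleK; exact: le_refl. Qed.

Lemma key i k P j (A : tup -> Prop) L Z (g : node -> tup) :
  (forall x, A x -> exists y, x = g y) -> is_lub i k P A L ->
  (forall a, A a -> lej i k P j a Z) -> lej i k P j L Z.
Proof.
move=> hA [hub hleast] hZ.
case: (lej_total i k P j L Z) => // [[j0 [hj0 hl hagr hlt]]].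
pose W := fun j' => if j' < j0 then L j' else if j' == j0 then Z j0 else OS (Usup g j').
have helper : forall a, A a -> agr i k P j0.+1 a W -> lex_le i k P a W.
  move=> a Aa Hag.
  case: (hA a Aa) => y ->{a Aa} in Hag *.
  case: (boolP [exists m : 'I_k.+1, losing i k P m && (j0 < m)]) => [He|Hne].
  - have ex : exists m, losing i k P m && (j0 < m).
      by case/existsP: He => m hm; exists m.
    case: (ex_minnP ex) => m /andP [hm1 hm2] hmin.
    left; exists m; split=> //.
    + move=> j' h1 h2; apply: Hag => //; rewrite ltnS leqNgt; apply/negP => h3.
      by have := hmin j' (introT andP (conj h1 h3)); rewrite leqNgt h2.
    + rewrite /W ltnNge (ltnW hm2) /= gtn_eqF //. exact: Usup_ge.
  - right=> j' h1; apply: Hag => //. rewrite ltnS leqNgt; apply/negP => h3.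
    move/existsPn: Hne => Hne.
    have hjk : j' < k.+1 by case/andP: h1 => /andP [_ h].
    by have := Hne (Ordinal hjk); rewrite /= h1 h3.
have WL : forall j', j' < j0 -> W j' = L j' by move=> j' h; rewrite /W h.
have ub : forall a, A a -> lex_le i k P a W.
  move=> a Aa; case: (hZ a Aa) => [[b [hb hlb hbg hlt']]|Hu].
  - case: (ltngtP b j0) => hbj.
    + left; exists b; split=> //.
      * move=> j' h1 h2; rewrite WL ?(ltn_trans h2 hbj) //.
        apply: oeq_trans (hbg _ h1 h2) (hagr _ h1 (ltn_trans h2 hbj)).
      * rewrite WL //; apply: lt_le_trans hlt' (proj1 (hagr _ hlb hbj)).
    + apply: helper => // j' h1; rewrite ltnS leq_eqVlt => /orP [/eqP E|h2].
      * subst j'; rewrite /W ltnn eqxx; exact: hbg.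
      * rewrite WL //; apply: oeq_trans (hbg _ h1 (ltn_trans h2 hbj)) (hagr _ h1 h2).
    + subst b; left; exists j0; split=> //.
      * move=> j' h1 h2; rewrite WL //; apply: oeq_trans (hbg _ h1 h2) (hagr _ h1 h2).
      * by rewrite /W ltnn eqxx.
  - apply: helper => // j' h1; rewrite ltnS leq_eqVlt => /orP [/eqP E|h2].
    + subst j'; rewrite /W ltnn eqxx; exact: Hu.
    + rewrite WL //; apply: oeq_trans (Hu _ h1 (leq_trans (ltnW h2) hj0)) (hagr _ h1 h2).
have H := hleast W ub.
exfalso; apply: (@lexlt_le_F i k P W L _ H); exists j0; split=> //.
- move=> j' h1 h2; rewrite WL //; exact: oeq_refl.
- by rewrite /W ltnn eqxx.
Qed.

Lemma prefix_takeE (s y : node) : prefix s y -> s = take (size s) y.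
Proof. by rewrite prefixE => /eqP ->. Qed.

Lemma prefix_size (a b : node) : prefix a b -> size a <= size b.
Proof. exact: size_prefix. Qed.

Lemma prefix_of_take (a b : node) : size a <= size b -> prefix (take (size a) b) b.
Proof. move=> _; exact: prefix_take. Qed.

Lemma prefix_cmp (a b c : node) : prefix a c -> prefix b c -> prefix a b \/ prefix b a.
Proof.
move=> /prefix_takeE Ha /prefix_takeE Hb.
case: (leqP (size a) (size b)) => h.
- by left; rewrite prefixE {1}Hb take_takel // -Ha.
- by right; rewrite prefixE {1}Ha take_takel ?(ltnW h) // -Hb.
Qed.

Lemma prefix_cat2 (u a b : node) : prefix (u ++ a) (u ++ b) = prefix a b.
Proof. elim: u => // x u IH; by rewrite cat_cons cat_cons prefix_cons eqxx IH. Qed.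

Lemma prefix_split (u y : node) : prefix u y -> y = u ++ drop (size u) y.
Proof. move=> /prefix_takeE H. by rewrite {1}H cat_take_drop. Qed.

Lemma prefix_eq_size (a b : node) : prefix a b -> size b <= size a -> a = b.
Proof.
move=> /prefix_takeE H h. by rewrite H take_oversize.
Qed.

Lemma take_catR (u y : node) p : take (size u + p) (u ++ y) = u ++ take p y.
Proof. by rewrite take_cat ltnNge leq_addr /= addKn. Qed.

Lemma prefix_trans' (a b c : node) : prefix a b -> prefix b c -> prefix a c.
Proof. move=> h1 h2; exact: prefix_trans h1 h2. Qed.

Lemma prefix_rcons_ext (v y : node) : prefix v y -> size v < size y ->
  prefix (rcons v (nth 0 y (size v))) y.
Proof.
move=> /prefix_takeE H h.
by rewrite {1}H -take_nth // prefix_take.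
Qed.

Lemma notctrl t P (v : node) m : t v = Some (Lp m) -> ~~ controlled t P v.
Proof. by move=> H; rewrite /controlled H; case: P; rewrite /= !andbF. Qed.

Lemma child0 i k t P S (v : node) m : is_tree i k t -> is_strategy t P S ->
  S v -> t v = Some (Lp m) -> S (rcons v 0).
Proof.
move=> [_ _ har _] [_ _ _ _ hnc] Sv tv.
apply: hnc => //; first exact: notctrl tv.
by apply/(har _ _ tv).
Qed.

Lemma only0 i k t (v : node) m n : is_tree i k t ->
  t v = Some (Lp m) -> in_dom t (rcons v n) -> n = 0.
Proof. move=> [_ _ har _] tv /(har _ _ tv). by case: n. Qed.

Lemma ext_child i k t (v y : node) m : is_tree i k t ->
  t v = Some (Lp m) -> in_dom t y -> prefix v y -> y <> v -> prefix (rcons v 0) y.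
Proof.
move=> ht tv dy pvy nyv.
case: (leqP (size y) (size v)) => h.
  by exfalso; apply: nyv; rewrite (prefix_eq_size pvy h).
have H := prefix_rcons_ext pvy h.
have d : in_dom t (rcons v (nth 0 y (size v))).
  by case: ht => _ hp _ _; apply: hp dy.
by rewrite -(only0 ht tv d).
Qed.

Lemma act_S i k t P S v : active i k t P S v -> S v.
Proof. by case. Qed.

Lemma act_lab i k t P S v : active i k t P S v -> exists m, t v = Some (Lp m).
Proof. by case=> _ [m [h _]]; exists m. Qed.

Lemma succ_self i k t P S v y : active i k t P S v ->
  (succ_nodes i k t P S v y <-> y = v).
Proof.
move=> hv; split.
- case=> _ pvy hmin. by rewrite (hmin v hv (prefix_refl _) pvy).
- move=> ->; split=> // [|w' _ h1 h2]; first exact: prefix_refl.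
  apply/eqP; rewrite eq_sym; apply/eqP; exact: prefix_eq_size h1 (size_prefix h2).
Qed.

Lemma succ_step i k t P S v y m : is_tree i k t -> is_strategy t P S ->
  ~ active i k t P S v -> t v = Some (Lp m) ->
  (succ_nodes i k t P S v y <-> succ_nodes i k t P S (rcons v 0) y).
Proof.
move=> ht hS nav tv.
have dom : forall w, active i k t P S w -> in_dom t w.
  by move=> w /act_S; case: hS => hd _ _ _ _; apply: hd.
have nev : forall w, active i k t P S w -> w <> v by move=> w aw E; subst w.
split.
- case=> ay pvy hmin; split=> //.
  + exact: ext_child ht tv (dom _ ay) pvy (nev _ ay).
  + move=> w' aw' h1 h2; apply: hmin => //.
    exact: prefix_trans (prefix_rcons _ _) h1.
- case=> ay pvy hmin; split=> //.
  + exact: prefix_trans (prefix_rcons _ _) pvy.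
  + move=> w' aw' h1 h2; apply: hmin => //.
    exact: ext_child ht tv (dom _ aw') h1 (nev _ aw').
Qed.

Definition pb (Q : Prop) : bool := if excluded_middle_informative Q then true else false.
Lemma pbP (Q : Prop) : reflect Q (pb Q).
Proof. rewrite /pb; case: excluded_middle_informative => h; by constructor. Qed.

Lemma pfx_u (u w w' : node) : prefix (u ++ w) w' -> w' = u ++ drop (size u) w'.
Proof. move=> h; apply: prefix_split; exact: catl_prefix h. Qed.

Lemma act_act' i k t P S (u w : node) :
  active i k t P S (u ++ w) -> active i k (subtree t u) P (restr S u) w.
Proof.
case=> Sw [m [tm [lm cm]]]; split; first exact: Sw.
exists m; split; first exact: tm. split; first exact: lm.
move=> p hp; rewrite /subtree -take_catR; apply: cm.
by rewrite size_cat ltn_add2l.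
Qed.

Lemma act'_pos i k t P S (u w : node) j m p : clean_above t u j ->
  active i k (subtree t u) P (restr S u) w -> t (u ++ w) = Some (Lp m) ->
  p < size (u ++ w) ->
  t (take p (u ++ w)) <> Some Lsim /\
  (size u <= p -> forall j', j' < m -> t (take p (u ++ w)) <> Some (Lp j')).
Proof.
move=> hcu [_ [m0 [tm0 [_ cm]]]] tm hp.
rewrite /subtree tm in tm0; case: tm0 => E; subst m0.
case: (ltnP p (size u)) => hpu.
- rewrite takel_cat ?(ltnW hpu) //; split; first exact: (proj1 (hcu p hpu)).
  by [].
- have -> : p = size u + (p - size u) by rewrite subnKC.
  rewrite take_catR.
  have hp' : p - size u < size w by rewrite ltn_subLR // -size_cat.
  have [h1 h2] := cm _ hp'.
  split; [exact: h1 | move=> _ j' hj'; exact: h2].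
Qed.

Lemma act'_nact i k t P S (u w : node) j m : clean_above t u j ->
  active i k (subtree t u) P (restr S u) w -> t (u ++ w) = Some (Lp m) ->
  ~ active i k t P S (u ++ w) -> j < m.
Proof.
move=> hcu aw tm na; rewrite ltnNge; apply/negP => hmj; apply: na.
have aw' := aw; case: aw' => Sw [m0 [tm0 [lm0 _]]].
rewrite /subtree tm in tm0; case: tm0 => E; subst m0.
split=> //; exists m; split=> //; split=> // p hp.
have [h1 h2] := act'_pos (p:=p) hcu aw tm hp.
split=> // j' hj'.
case: (ltnP p (size u)) => hpu; last exact: h2.
rewrite takel_cat ?(ltnW hpu) //; apply: (proj2 (hcu p hpu)).
exact: leq_trans hj' hmj.
Qed.


Lemma B1 i k t P S (u w x : node) :
  succ_nodes i k (subtree t u) P (restr S u) w x -> active i k t P S (u ++ x) ->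
  succ_nodes i k t P S (u ++ w) (u ++ x).
Proof.
case=> ax pwx hmin aux; split=> //; first by rewrite prefix_cat2.
move=> w' aw' h1 h2.
have E := pfx_u h1; rewrite E in aw' h1 h2 *.
rewrite prefix_cat2 in h1; rewrite prefix_cat2 in h2.
by rewrite (hmin _ (act_act' aw') h1 h2).
Qed.

Lemma B2 i k t P S (u w x y : node) :
  succ_nodes i k (subtree t u) P (restr S u) w x -> ~ active i k t P S (u ++ x) ->
  succ_nodes i k t P S (u ++ x) y -> succ_nodes i k t P S (u ++ w) y.
Proof.
case=> ax pwx hmin nax [ay pxy hminy]; split=> //.
  by apply: prefix_trans pxy; rewrite prefix_cat2.
move=> w' aw' h1 h2.
case: (prefix_cmp h2 pxy) => h3; last exact: hminy.
exfalso; apply: nax.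
have E := pfx_u h1; rewrite E in aw' h1 h3 *.
rewrite prefix_cat2 in h1; rewrite prefix_cat2 in h3.
by rewrite -(hmin _ (act_act' aw') h1 h3).
Qed.

Lemma B3 i k t P S (u w y : node) :
  succ_nodes i k t P S (u ++ w) y ->
  exists x, succ_nodes i k (subtree t u) P (restr S u) w x /\
    (u ++ x = y \/ (~ active i k t P S (u ++ x) /\ succ_nodes i k t P S (u ++ x) y)).
Proof.
case=> ay puy hmin.
have Ey := pfx_u puy; set y' := drop (size u) y in Ey.
have ay' : active i k (subtree t u) P (restr S u) y' by apply: act_act'; rewrite -Ey.
have pwy : prefix w y' by rewrite -(prefix_cat2 u) -Ey.
have ex : exists n, (size w <= n) && pb (active i k (subtree t u) P (restr S u) (take n y')).
  exists (size y'); rewrite take_size (size_prefix pwy) /=; exact/pbP.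
case: (ex_minnP ex) => n /andP [hwn /pbP an] hnmin.
set x := take n y'.
have pxy : prefix x y' by exact: prefix_take.
have sx : size x <= n by rewrite size_take; case: ifP => // /negbT; rewrite -leqNgt.
have sc : succ_nodes i k (subtree t u) P (restr S u) w x.
  split=> //.
  - by rewrite prefixE /x take_takel // -(prefix_takeE pwy).
  - move=> w'' aw'' h1 h2.
    have py : prefix w'' y' := prefix_trans h2 pxy.
    have := hnmin (size w''); rewrite (size_prefix h1) -(prefix_takeE py) /=.
    move=> /(_ (introT (pbP _) aw'')) hn.
    exact: (prefix_eq_size h2 (leq_trans sx hn)).
exists x; split=> //.
case: (classic (u ++ x = y)) => hxy; [by left | right].
have pux : prefix (u ++ x) y by rewrite Ey prefix_cat2.
split.
- move=> aux; apply: hxy; apply: hmin => //. by rewrite prefix_cat2; case: sc.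
- split=> // w' aw' h1 h2; apply: hmin => //.
  apply: prefix_trans h1; rewrite prefix_cat2; by case: sc.
Qed.

Lemma choiceT (A B : Type) (Q : A -> B -> Prop) :
  (forall a, exists b, Q a b) -> exists f : A -> B, forall a, Q a (f a).
Proof.
move=> H; exists (fun a => proj1_sig (constructive_indefinite_description _ (H a))).
move=> a; exact: proj2_sig.
Qed.

Definition Rsub i k t P (S : strat) (u : node) (x w : node) : Prop :=
  [/\ S (u ++ x), prefix w x, x <> w &
      exists y, active i k (subtree t u) P (restr S u) y /\ prefix w y /\ prefix y x].

Lemma take_pref (b : nat -> nat) n L : n <= L -> take n (pref b L) = pref b n.
Proof. by move=> h; rewrite /pref /mkseq -map_take take_iota (minn_idPl h). Qed.

Lemma Rsub_wf i k t P S u j :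
  is_winning_strategy k t P S -> clean_above t u j -> forall w, Acc (Rsub i k t P S u) w.
Proof.
move=> [hS hwin] hcu w0; apply: NNPP => nacc.
set R := Rsub i k t P S u.
have step : forall w, exists x, ~ Acc R w -> R x w /\ ~ Acc R x.
  move=> w; case: (classic (Acc R w)) => h; first by exists w.
  have [x hx] : exists x, R x w /\ ~ Acc R x.
    apply: NNPP => H; apply: h; constructor => x Rx; apply: NNPP => hx.
    by apply: H; exists x.
  by exists x.
have [f hf] := choiceT step.
pose c n := iter n f w0.
have hc : forall n, ~ Acc R (c n) by elim=> [//|n IH]; exact: (proj2 (hf _ IH)).
have Rc : forall n, R (c n.+1) (c n) by move=> n; exact: (proj1 (hf _ (hc n))).
have pc1 : forall n, prefix (c n) (c n.+1) by move=> n; case: (Rc n).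
have pc : forall n m, n <= m -> prefix (c n) (c m).
  move=> n m /subnKC <-; elim: (m - n) => [|d IH]; first by rewrite addn0 prefix_refl.
  rewrite addnS; exact: prefix_trans IH (pc1 _).
have szc : forall n, n <= size (c n).
  elim=> // n IH; apply: leq_ltn_trans IH _.
  case: (Rc n) => _ p ne _; rewrite ltnNge; apply/negP => h.
  by apply: ne; apply/esym; apply: prefix_eq_size p h.
have [yf hy] : exists yf : nat -> node, forall n,
    active i k (subtree t u) P (restr S u) (yf n) /\ prefix (c n) (yf n) /\
    prefix (yf n) (c n.+1).
  apply: (@choiceT nat node (fun n y => active i k (subtree t u) P (restr S u) y /\ prefix (c n) y /\ prefix y (c n.+1))) => n.
  by case: (Rc n) => _ _ _ [y hy]; exists y.
have [mf hm] : exists mf : nat -> nat, forall n,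
    t (u ++ yf n) = Some (Lp (mf n)) /\ losing i k P (mf n).
  apply: (@choiceT nat nat (fun n m => t (u ++ yf n) = Some (Lp m) /\ losing i k P m)) => n.
  case: (hy n) => [[_ [m [tm [lm _]]]] _]; by exists m.
pose V n := u ++ c n.
pose Y n := u ++ yf n.
have pV : forall n m, n <= m -> prefix (V n) (V m) by move=> n m h; rewrite prefix_cat2; exact: pc.
have szV : forall n, n <= size (V n) by move=> n; rewrite size_cat; apply: leq_trans (szc n) (leq_addl _ _).
pose b q := nth 0 (V q.+1) q.
have prefB : forall q N, q <= N -> pref b q = take q (V N).
  move=> q N hqN; apply: (@eq_from_nth _ 0).
    by rewrite size_mkseq size_takel // (leq_trans hqN (szV N)).
  move=> x; rewrite size_mkseq => hx.
  rewrite nth_mkseq // nth_take // /b.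
  have : prefix (V x.+1) (V N) by apply: pV; exact: leq_trans hx hqN.
  have hx1 : x < size (V x.+1) by apply: leq_trans (szV _).
  case/prefixP => r ->; by rewrite (nth_cat 0 (V x.+1) r) hx1.
have onb : forall s N, prefix s (V N) -> pref b (size s) = s.
  move=> s N ps; rewrite (prefB _ (maxn N (size s))) ?leq_maxr //.
  apply/esym; apply: prefix_takeE; apply: prefix_trans ps (pV _ _ _); exact: leq_maxl.
have pVY : forall n, prefix (V n) (Y n) by move=> n; rewrite prefix_cat2; case: (hy n) => _ [].
have pYV : forall n, prefix (Y n) (V n.+1) by move=> n; rewrite prefix_cat2; case: (hy n) => _ [].
have szY : forall n, n <= size (Y n) by move=> n; apply: leq_trans (szV n) (size_prefix (pVY n)).
have onY : forall n, pref b (size (Y n)) = Y n by move=> n; exact: onb _ _ (pYV n).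
have posY : forall n p, p < size (Y n) -> t (take p (Y n)) <> Some Lsim /\
    (size u <= p -> forall j', j' < mf n -> t (take p (Y n)) <> Some (Lp j')).
  move=> n p hp; case: (hy n) => ay _; exact: act'_pos hcu ay (proj1 (hm n)) hp.
have mono : forall n0 n, n0 <= n -> mf n <= mf n0.
  move=> n0 n; rewrite leq_eqVlt => /orP [/eqP <- //|hlt].
  have pY : prefix (Y n0) (Y n).
    apply: prefix_trans (pYV n0) _; apply: prefix_trans (pV _ _ hlt) (pVY n).
  have E := prefix_takeE pY.
  case: (ltnP (size (Y n0)) (size (Y n))) => hs.
  - rewrite leqNgt; apply/negP => hmm.
    have [_ h2] := posY n _ hs.
    apply: (h2 _ _ hmm); first by rewrite size_cat leq_addr.
    by rewrite -E (proj1 (hm n0)).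
  - have E2 : Y n0 = Y n by apply: prefix_eq_size pY hs.
    have := proj1 (hm n); rewrite /Y -/(Y n) -E2 /Y (proj1 (hm n0)); by case=> ->.
have exM : exists M, pb (exists n, mf n = M) by exists (mf 0); apply/pbP; exists 0.
case: (ex_minnP exM) => M /pbP [n0 hn0] hMmin.
have stable : forall n, n0 <= n -> mf n = M.
  move=> n h; apply/eqP; rewrite eqn_leq -{1}hn0 mono //=.
  apply: hMmin; apply/pbP; by exists n.
have infM : inf_p t b M.
  move=> N; exists (size (Y (maxn N n0))); split.
  - exact: leq_trans (leq_maxl _ _) (szY _).
  - by rewrite onY (proj1 (hm _)) stable // leq_maxr.
have noinf : forall j', j' < M -> ~ inf_p t b j'.
  move=> j' hj' hinf; case: (hinf (size u)) => n [hun htn].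
  set q := maxn n0 n.+1.
  have hnq : n < size (Y q) by apply: leq_trans (szY q); exact: leq_maxr.
  have [_ h2] := posY q n hnq.
  apply: (h2 hun j'); first by rewrite stable // leq_maxl.
  by rewrite -(onY q) take_pref ?(ltnW hnq).
have notsw : forall n, ~~ switched t (pref b n).
  move=> n; rewrite /switched size_mkseq.
  rewrite (@eq_in_count _ _ pred0); first by rewrite count_pred0.
  move=> m; rewrite mem_iota add0n => /andP [_ hmn] /=.
  have hmY : m < size (Y n) by apply: leq_trans hmn (szY n).
  have [h1 _] := posY n m hmY.
  rewrite take_pref ?(ltnW hmn) // -(take_pref b (ltnW hmY)) onY.
  by move: h1; case: (t (take m (Y n))) => // [[]].
have LI : forall m, least_inf k t b m -> m = M.
  move=> m [[hi hmn]|[_ hn]]; last by exfalso; exact: hn M infM.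
  case: (ltngtP m M) => // h.
  - by exfalso; exact: noinf m h hi.
  - by exfalso; exact: hmn M h infM.
have LIM : least_inf k t b M by left; split.
have W1 : won_by_1 k t b <-> ~~ odd M.
  split.
  - case=> [[_ [m [hm1 hm2]]]|[[N hN] _]].
    + by rewrite -(LI m hm1).
    + by exfalso; move: (notsw N); rewrite hN.
  - move=> h; left; split; first by exists 0 => n _; exact: notsw.
    by exists M.
have Sb : forall n, S (pref b n).
  move=> n; case: hS => _ _ hpc _ _; apply: (hpc _ (V n.+1)).
  - rewrite (prefB n n.+1) //; exact: prefix_take.
  - by case: (Rc n).
have := hwin b Sb.
have lM : losing i k P M by rewrite -hn0; exact: (proj2 (hm n0)).
move: lM; rewrite /losing; destruct P => /= lM WB.
- have := proj1 W1 WB; by case/andP: lM => _ ->.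
- apply: WB; apply: (proj2 W1); by case/andP: lM.
Qed.

Lemma lubs_teqU i k P j (A B : tup -> Prop) L M (g h : node -> tup) :
  (forall x, A x -> exists y, x = g y) -> (forall x, B x -> exists y, x = h y) ->
  is_lub i k P A L -> is_lub i k P B M ->
  (forall a, A a -> lej i k P j a M) -> (forall b, B b -> lej i k P j b L) ->
  teq_upto i k P j L M.
Proof.
move=> hA hB lA lB HA HB; apply: lej_antisym.
- exact: key hA lA HA.
- exact: key hB lB HB.
Qed.

Lemma bump_teqU i k P j (m : nat) (x y : tup) :
  teq_upto i k P j x y -> teq_upto i k P j (Defs.bump m x) (Defs.bump m y).
Proof.
move=> H j' h1 h2; rewrite /Defs.bump.
case: (ltnP j' m) => h3; first exact: H.
case: eqP => E; last exact: oeq_refl.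
subst j'; case: (H m h1 h2) => a b; by split.
Qed.

Lemma bump_below i k P j (m : nat) (x : tup) : j < m -> teq_upto i k P j (Defs.bump m x) x.
Proof.
move=> hjm j' h1 h2; rewrite /Defs.bump (leq_ltn_trans h2 hjm); exact: oeq_refl.
Qed.

Lemma teqU_lej' i k P j x y : teq_upto i k P j x y -> lej i k P j y x.
Proof. move=> H; right; exact: teqU_sym. Qed.

Lemma lej_refl i k P j x : lej i k P j x x.
Proof. right; exact: teqU_refl. Qed.

Theorem mainTheorem11 (i k : nat) (t : tree) (P : player) (S : strat)
    (u : node) (j : nat) (s s' : node -> tup) :
  i < k ->
  is_tree i k t -> well_formed t ->
  is_winning_strategy k t P S ->
  S u ->
  losing i k P j ->
  clean_above t u j ->
  is_rank i k t P S s ->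
  is_rank i k (subtree t u) P (restr S u) s' ->
  teq_upto i k P j (s' [::]) (s u).
Proof.
move=> _ ht _ hW Su _ hcu rs rs'.
have hS := proj1 hW.
set act := active i k t P S.
set act' := active i k (subtree t u) P (restr S u).
have IHR : forall w x, S (u ++ x) -> prefix w x -> x <> w ->
    act' x -> Rsub i k t P S u x w.
  move=> w x Sx pwx nxw ax; split=> //; exists x; split=> //; split=> //; exact: prefix_refl.
have claim : forall w, S (u ++ w) -> teq_upto i k P j (s' w) (s (u ++ w)).
  move=> w; elim: (Rsub_wf i hW hcu w) => {}w _ IH Sw.
  have [ra' rb'] := rs' w Sw.
  have [ra rb] := rs (u ++ w) Sw.
  case: (classic (act' w)) => aw.
  -
    have [m tm] := act_lab aw.
    have tm' : t (u ++ w) = Some (Lp m) by exact: tm.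
    have Sw0 : S (u ++ rcons w 0) by rewrite -rcons_cat; exact: child0 ht hS Sw tm'.
    have R0 : Rsub i k t P S u (rcons w 0) w.
      split=> //; first exact: prefix_rcons.
      - by move=> E; have := congr1 size E; rewrite size_rcons => /eqP; rewrite eqn_leq ltnn.
      - exists w; split=> //; split; [exact: prefix_refl | exact: prefix_rcons].
    have {}IHc := IH _ R0 Sw0.
    have e1 := teq_teqU (j:=j) (ra' m aw tm).
    case: (classic (act (u ++ w))) => auw.
    + have e2 := teq_teqU (j:=j) (ra m auw tm').
      rewrite rcons_cat in e2 *.
      apply: teqU_trans e1 _; apply: teqU_trans _ (teqU_sym e2).
      exact: bump_teqU.
    + have hjm := act'_nact hcu aw tm' auw.
      apply: (teqU_trans e1). apply: (teqU_trans (@bump_below i k P j m (s' (rcons w 0)) hjm)).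
      apply: (teqU_trans IHc).
      rewrite -rcons_cat.
      have [hub hleast] := rb auw.
      have Sw0' : S (rcons (u ++ w) 0) by rewrite rcons_cat.
      have sst := fun y => succ_step y ht hS auw tm'.
      have gA : forall x, (fun x => exists y, succ_nodes i k t P S (u ++ w) y /\ x = s y) x ->
          exists y, x = s y by move=> x [y [_ ->]]; exists y.
      case: (classic (act (rcons (u ++ w) 0))) => a0.
      * apply: teqU_sym; apply: lej_antisym.
        -- apply: (key gA (conj hub hleast)) => a [y [sy ->]].
           move/sst: sy; move/(succ_self _ a0) => ->; exact: lej_refl.
        -- apply: lexle_lej; apply: hub; exists (rcons (u ++ w) 0); split=> //.
           apply/sst; exact/(succ_self _ a0).
      * have [hub0 hleast0] := (proj2 (rs _ Sw0')) a0.
        apply: teqU_sym; apply: (lubs_teqU gA _ (conj hub hleast) (conj hub0 hleast0)).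
        -- by move=> x [y [_ ->]]; exists y.
        -- move=> a [y [sy ->]]; apply: lexle_lej; apply: hub0; exists y; split=> //.
           exact/sst.
        -- move=> a [y [sy ->]]; apply: lexle_lej; apply: hub; exists y; split=> //.
           exact/sst.
  -
    have nauw : ~ act (u ++ w) by move=> h; apply: aw; exact: act_act'.
    have [hub hleast] := rb nauw.
    have [hub' hleast'] := rb' aw.
    have IHx : forall x, succ_nodes i k (subtree t u) P (restr S u) w x ->
        teq_upto i k P j (s' x) (s (u ++ x)).
      move=> x [ax pwx _]; have Sx : S (u ++ x) := act_S ax.
      apply: (IH x _ Sx); apply: IHR => // E; subst x; exact: aw ax.
    apply: (lubs_teqU _ _ (conj hub' hleast') (conj hub hleast)).
    + by move=> x [y [_ ->]]; exists y.
    + by move=> x [y [_ ->]]; exists y.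
    + move=> b [x [sx ->]].
      have ex := IHx x sx.
      have Sx : S (u ++ x) by case: sx => ax _ _; exact: (act_S ax).
      apply: lej_trans (teqU_lej ex) _.
      case: (classic (act (u ++ x))) => ax.
      * apply: lexle_lej; apply: hub; exists (u ++ x); split=> //; exact: B1 sx ax.
      * have [hubx hleastx] := (proj2 (rs _ Sx)) ax.
        apply: lexle_lej; apply: hleastx => y [z [sz ->]].
        apply: hub; exists z; split=> //; exact: B2 sx ax sz.
    + move=> a [y [sy ->]].
      have [x [sx hx]] := B3 sy.
      have ex := IHx x sx.
      have Sx : S (u ++ x) by case: sx => ax _ _; exact: (act_S ax).
      have up : lej i k P j (s' x) (s' w) by apply: lexle_lej; apply: hub'; exists x.
      apply: lej_trans _ up; apply: lej_trans _ (teqU_lej' ex).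
      case: hx => [<-|[ax sxy]]; first exact: lej_refl.
      have [hubx _] := (proj2 (rs _ Sx)) ax.
      apply: lexle_lej; apply: hubx; by exists y.
have := claim [::]; rewrite cats0; exact.
Qed.
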